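(* Let $L$ be a distributive lattice with minimum $0_L$ and maximum $1_L$, and let $K_L=\{x^*\in L^*:\max\{|x^*(0_L)|,|x^*(1_L)|\}=1\}$ with the product (pointwise) topology. If $U\subseteq K_L$ is open, $x_0^*\in U$ and $\varepsilon>0$, then there exists $g\in\mathrm{FVL}\langle L\rangle$ with $g\ge0$ such that $g(x_0^* )>0$, $g\le\varepsilon$ on $U$, and $g=0$ on $K_L\setminus U$.
   Context: $L^*$ is the set of all lattice homomorphisms $x^*:L\to[-1,1]$; for $x\in L$, $\delta_x:L^*\to\mathbb R$ is $\delta_x(x^* )=x^*(x)$. $\mathrm{FVL}\langle L\rangle$ is the vector sublattice of $\mathbb R^{L^*}$ (pointwise operations) generated by $\{\delta_x:x\in L\}$. $\mathrm{FBL}\langle L\rangle$ is its norm closure with respect to the norm $\|f\|=\sup\{\sum_{i=1}^m|f(x_i^* )|: m\in\mathbb N,\ x_i^*\in L^*,\ \sup_{x\in L}\sum_{i=1}^m|x_i^*(x)|\le1\}$ within positively homogeneous functions on $L^*$. *)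

(* Defs.v *)
From HB Require Import structures.
From mathcomp Require Import all_boot all_order all_algebra.
From mathcomp Require Import all_classical all_reals all_analysis.
Set Implicit Arguments. Unset Strict Implicit. Unset Printing Implicit Defensive.
Import Order.TTheory GRing.Theory Num.Theory.
Import numFieldTopology.Exports.
Local Open Scope ring_scope.
Local Open Scope classical_set_scope.

Section FBL.
Variables (d : Order.disp_t) (L : distrLatticeType d) (R : realType).

Definition is_lattice_hom_pm1 (xs : L -> R) : Prop :=
  [/\ forall a b, xs (Order.meet a b) = Num.min (xs a) (xs b),
      forall a b, xs (Order.join a b) = Num.max (xs a) (xs b) &
      forall a, -1 <= xs a <= 1].

Definition Lstar : set (L -> R) := [set xs | is_lattice_hom_pm1 xs].

Definition delta (a : L) : (L -> R) -> R := fun xs => xs a.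

(* FVL<L>: the vector sublattice of R^(Lstar) generated by the delta_x,
   i.e. the smallest set of functions containing all delta_x and closed
   under pointwise addition, scalar multiplication, max and min.
   (Functions are defined on all of L -> R; only their values on L^*
   are ever used.) *)
Inductive FVL : ((L -> R) -> R) -> Prop :=
| FVL_delta a : FVL (delta a)
| FVL_add f g : FVL f -> FVL g -> FVL (fun xs => f xs + g xs)
| FVL_scale (c : R) f : FVL f -> FVL (fun xs => c * f xs)
| FVL_max f g : FVL f -> FVL g -> FVL (fun xs => Num.max (f xs) (g xs))
| FVL_min f g : FVL f -> FVL g -> FVL (fun xs => Num.min (f xs) (g xs)).

End FBL.

Section KL.
Variables (d : Order.disp_t) (L : tbDistrLatticeType d) (R : realType).

Definition KL : set (L -> R) :=
  [set xs | Lstar xs /\ Num.max `|xs \bot%O| `|xs \top%O| = 1].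

Definition open_in_KL (U : set (L -> R)) : Prop :=
  U `<=` KL /\
  exists V : set {ptws L -> R}, open V /\ U = V `&` KL.
End KL.

(* Main.v *)
Require Import Defs.
From HB Require Import structures.
From mathcomp Require Import all_boot all_order all_algebra.
From mathcomp Require Import all_classical all_reals all_analysis.
Import Order.TTheory GRing.Theory Num.Theory.
Import numFieldTopology.Exports.
Local Open Scope ring_scope.
Local Open Scope classical_set_scope.

From mathcomp Require Import lra.

Section FVLlem.
Variables (d : Order.disp_t) (L : distrLatticeType d) (R : realType).

Lemma FVL_ext (f g : (L -> R) -> R) : (forall x, f x = g x) -> FVL f -> FVL g.
Proof. by move=> e; rewrite (funext e). Qed.

Arguments FVL_ext {f g}.
Lemma FVL_opp (f : (L -> R) -> R) : FVL f -> FVL (fun x : L -> R => - f x).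
Proof. move=> h; apply: FVL_ext (FVL_scale (-1) h) => x; by rewrite mulN1r. Qed.

Arguments FVL_opp {f}.
Lemma FVL_sub (f g : (L -> R) -> R) : FVL f -> FVL g -> FVL (fun x : L -> R => f x - g x).
Proof. by move=> hf hg; exact: (FVL_add hf (FVL_opp hg)). Qed.

Arguments FVL_sub {f g}.
Lemma FVL_abs (f : (L -> R) -> R) : FVL f -> FVL (fun x : L -> R => `|f x|).
Proof.
move=> h; apply: FVL_ext (FVL_max h (FVL_opp h)) => x.
by rewrite maxrN.
Qed.

Arguments FVL_abs {f}.
Lemma FVL_zero (a : L) : FVL (fun x : L -> R => 0).
Proof. apply: FVL_ext (FVL_scale 0 (FVL_delta R a)) => x; by rewrite mul0r. Qed.

Lemma FVL_sum (a0 : L) (s : seq L) (F : L -> (L -> R) -> R) :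
  (forall a, FVL (F a)) -> FVL (fun x => \sum_(a <- s) F a x).
Proof.
move=> hF; elim: s => [|a s IH].
  by apply: FVL_ext (FVL_zero a0) => x; rewrite big_nil.
by apply: FVL_ext (FVL_add (hF a) IH) => x; rewrite big_cons.
Qed.
End FVLlem.
Arguments FVL_opp {d L R f}.
Arguments FVL_sub {d L R f g}.
Arguments FVL_abs {d L R f}.
Arguments FVL_zero {d L R}.
Arguments FVL_ext {d L R f g}.
Arguments FVL_sum {d L R}.

Lemma sum_small (T : Type) (R : realType) (s : seq T) (F : T -> R) (e : R) :
  (forall a, 0 <= F a) -> \sum_(a <- s) F a < e -> all (fun a => F a < e) s.
Proof.
move=> F0; elim: s => [|a s IH] //=; rewrite big_cons => h.
have h1 : 0 <= \sum_(a <- s) F a by apply: sumr_ge0.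
have := F0 a => h2.
apply/andP; split; first lra.
apply: IH; lra.
Qed.
Section Box.
Variables (L : choiceType) (R : realType).

Definition boxF (x0 : L -> R) : set_system (L -> R) :=
  fun P => exists s : seq L, exists2 e : R, 0 < e &
    forall f, all (fun a => `|f a - x0 a| < e) s -> P f.

Lemma boxF_filter x0 : Filter (boxF x0).
Proof.
split.
- by exists [::]; exists 1.
- move=> P Q [s1 [e1 e10 H1]] [s2 [e2 e20 H2]].
  exists (s1 ++ s2); exists (Num.min e1 e2); first by rewrite lt_min e10 e20.
  move=> f; rewrite all_cat => /andP[A1 A2]; split.
  + apply: H1; apply: sub_all A1 => a /= h; by rewrite lt_min in h; case/andP: h.
  + apply: H2; apply: sub_all A2 => a /= h; by rewrite lt_min in h; case/andP: h.
- move=> P Q PQ [s [e e0 H]]; exists s; exists e => // f /H; exact: PQ.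
Qed.

Lemma box_nbhs (V : set {ptws L -> R}) (x0 : L -> R) :
  open V -> V x0 -> boxF x0 V.
Proof.
move=> oV Vx0.
have hF := boxF_filter x0.
have : {ptws, boxF x0 --> x0}.
  apply: ((@pointwise_cvgP (discrete_topology L) R (boxF x0) x0 hF).2) => t.
  move=> A /= /nbhs_ballP [e /= e0 He].
  exists [:: t]; exists e => // f /=; rewrite andbT => h.
  apply: He; rewrite /ball /= distrC; exact: h.
move=> /(_ V); apply.
exact: open_nbhs_nbhs.
Qed.
End Box.

Theorem mainTheorem6 (d : Order.disp_t) (L : tbDistrLatticeType d)
  (R : realType) (U : set (L -> R)) (x0 : L -> R) (eps : R) :
  open_in_KL U -> U x0 -> 0 < eps ->
  exists g : (L -> R) -> R,
    [/\ FVL g,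
        (forall xs, Lstar xs -> 0 <= g xs),
        0 < g x0,
        (forall xs, U xs -> g xs <= eps) &
        (forall xs, (KL (R:=R) `\` U) xs -> g xs = 0)].

Proof.
move=> [UK [V [oV UV]]] Ux0 eps0.
have Vx0 : V x0 by move: Ux0; rewrite UV => -[].
have [s [e e0 He]] := @box_nbhs L R V x0 oV Vx0.
pose del := Num.min e eps.
have del0 : 0 < del by rewrite lt_min e0 eps0.
pose N (xs : L -> R) := Num.max `|xs \bot%O| `|xs \top%O|.
pose S (xs : L -> R) := \sum_(a <- s) `|xs a - x0 a * N xs|.
pose h xs := del * N xs - S xs.
exists (fun xs => Num.max (h xs) 0).
have KN xs : KL xs -> N xs = 1 by case.
have S0 xs : 0 <= S xs by apply: sumr_ge0 => a _.
split.
- apply: FVL_max; last exact: FVL_zero \bot%O.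
  apply: FVL_sub.
    apply: FVL_scale; apply: FVL_max; apply: FVL_abs; exact: FVL_delta.
  apply: (FVL_sum \bot%O) => a; apply: FVL_abs; apply: FVL_sub; first exact: FVL_delta.
  apply: FVL_scale; apply: FVL_max; apply: FVL_abs; exact: FVL_delta.
- by move=> xs _; rewrite le_max lexx orbT.
- rewrite lt_max; apply/orP; left.
  rewrite /h /S KN; last exact: UK.
  rewrite big1_seq ?subr0 ?mulr1 // => a _.
  by rewrite mulr1 subrr normr0.
- move=> xs Uxs; rewrite ge_max; apply/andP; split; last exact: ltW.
  rewrite /h KN ?mulr1; last exact: UK.
  have := S0 xs; have : del <= eps by rewrite ge_min lexx orbT.
  lra.
- move=> xs [Kxs nUxs]; apply/eqP; rewrite eq_le le_max lexx orbT andbT ge_max lexx andbT.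
  rewrite leNgt; apply/negP => hpos; apply: nUxs; rewrite UV; split => //.
  apply: He.
  have : S xs < e.
    move: hpos; rewrite /h KN // mulr1 => hp.
    have : del <= e by rewrite ge_min lexx.
    lra.
  rewrite /S KN // => /sum_small; rewrite /= => /(_ (fun a => normr_ge0 _)).
  by apply: sub_all => a /=; rewrite mulr1.
Qed.
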